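(* Let $\mathcal{I}$ be finite, $\beta$ a positive integer, and for $\mathbf{Q}\in B(\mathcal{L})$ let $$p^{\beta}(\mathbf{Q})=\log\left(\sum_{S\in\mathcal{P}_{\mathbf{Q}}}\min\{\beta,|S|\}\right).$$ Then $p^\beta$ is an arbitrage-free instance-independent pricing function.
   Context: $\mathcal{I}$ is a set of database instances; queries are deterministic functions on $\mathcal{I}$; a query bundle is a finite tuple of queries from a language $\mathcal{L}$, evaluated componentwise; $B(\mathcal{L})$ is the set of bundles, closed under concatenation $\mathbf{Q}_1,\mathbf{Q}_2$. $\mathcal{P}_{\mathbf{Q}}$ is the partition of $\mathcal{I}$ into the equivalence classes of $D\sim D'\iff\mathbf{Q}(D)=\mathbf{Q}(D')$. An instance-independent pricing function $p$ is arbitrage-free if (i) whenever for all $D',D''\in\mathcal{I}$, $\mathbf{Q}_2(D')=\mathbf{Q}_2(D'')$ implies $\mathbf{Q}_1(D')=\mathbf{Q}_1(D'')$, we have $p(\mathbf{Q}_2)\ge p(\mathbf{Q}_1)$; and (ii) $p(\mathbf{Q}_1,\mathbf{Q}_2)\le p(\mathbf{Q}_1)+p(\mathbf{Q}_2)$ for all bundles. *)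

(* Defs.v *)
From HB Require Import structures.
From mathcomp Require Import all_boot all_order all_algebra.
From mathcomp Require Import boolp reals exp.
From Stdlib Require List.
Set Implicit Arguments. Unset Strict Implicit. Unset Printing Implicit Defensive.
Import Order.TTheory GRing.Theory Num.Theory.
Local Open Scope ring_scope.

(* Instances: a finite type I.  A query is a deterministic function I -> Out.
   A query language L is a predicate on queries.  A bundle is a finite
   sequence of queries, evaluated componentwise. *)

Definition eval_bundle (I : Type) (Out : Type) (Q : seq (I -> Out)) (D : I)
  : seq Out := map (fun q => q D) Q.

Definition in_bundles (I Out : Type) (L : (I -> Out) -> Prop)
  (Q : seq (I -> Out)) : Prop := forall q, List.In q Q -> L q.

Definition partition_of (I : finType) (Out : Type) (Q : seq (I -> Out))
  : {set {set I}} :=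
  [set [set D' | `[< eval_bundle Q D' = eval_bundle Q D >] ] | D in I].

Definition p_beta (R : realType) (I : finType) (Out : Type) (beta : nat)
  (Q : seq (I -> Out)) : R :=
  ln ((\sum_(S in partition_of Q) minn beta #|S|)%N)%:R.

Definition arbitrage_free (R : realType) (I Out : Type)
  (L : (I -> Out) -> Prop) (p : seq (I -> Out) -> R) : Prop :=
  (forall Q1 Q2, in_bundles L Q1 -> in_bundles L Q2 ->
     (forall D' D'', eval_bundle Q2 D' = eval_bundle Q2 D'' ->
                     eval_bundle Q1 D' = eval_bundle Q1 D'') ->
     p Q1 <= p Q2)
  /\
  (forall Q1 Q2, in_bundles L Q1 -> in_bundles L Q2 ->
     p (Q1 ++ Q2) <= p Q1 + p Q2).

(* Main.v *)
Require Import Defs.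
From HB Require Import structures.
From mathcomp Require Import all_boot all_order all_algebra.
From mathcomp Require Import boolp reals exp.
From mathcomp Require Import zify.
Set Implicit Arguments. Unset Strict Implicit. Unset Printing Implicit Defensive.
Import Order.TTheory GRing.Theory Num.Theory.

Section Comb.
Variable (I : finType) (beta : nat).
Hypothesis hbeta : (0 < beta)%N.

Definition cls (T : Type) (k : I -> T) (x : I) : {set I} :=
  [set y | `[< k y = k x >] ].

Lemma in_cls T (k : I -> T) x y : (y \in cls k x) = `[< k y = k x >].
Proof. by rewrite inE. Qed.

Lemma cls_self T (k : I -> T) x : x \in cls k x.
Proof. by rewrite in_cls; apply/asboolP. Qed.

Lemma cls_eq T (k : I -> T) x y : k x = k y -> cls k x = cls k y.
Proof. by rewrite /cls => ->. Qed.

Definition F T (k : I -> T) : nat :=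
  (\sum_(S in [set cls k D | D in I]) minn beta #|S|)%N.

Lemma min_sub (J : finType) (A : {pred J}) (G : J -> nat) :
  (minn beta (\sum_(i in A) G i) <= \sum_(i in A) minn beta (G i))%N.
Proof.
apply: (big_ind2 (fun x y => minn beta x <= y)%N); try lia.
Qed.

Lemma img_le (J K : finType) (g : J -> K) (A : {pred J}) (G : K -> nat) :
  (\sum_(j in g @: A) G j <= \sum_(i in A) G (g i))%N.
Proof.
rewrite (partition_big_imset g A); apply: leq_sum => j /imsetP [i iA ->].
by rewrite (bigD1 i) /= ?iA ?eqxx // leq_addr.
Qed.

Lemma sub_sum (J : finType) (A A' P P' : {pred J}) (G : J -> nat) :
  [set i in A | P i]  \subset [set i in A' | P' i] ->
  (\sum_(i in A | P i) G i <= \sum_(i in A' | P' i) G i)%N.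
Proof.
move=> /subsetP AP; rewrite [X in (_ <= X)%N](bigID (fun i => (i \in A) && P i)) /=.
apply: leq_trans (leq_addr _ _); apply: eq_leq; apply: eq_bigl => i.
by case E: ((i \in A) && P i); rewrite ?andbF // andbT; have := AP i; rewrite !inE E => ->.
Qed.

Lemma sub_sum' (J : finType) (A A' P : {pred J}) (G : J -> nat) :
  [set i in A | P i]  \subset A' ->
  (\sum_(i in A | P i) G i <= \sum_(i in A') G i)%N.
Proof.
move=> /subsetP AP; rewrite [X in (_ <= X)%N](bigID (fun i => (i \in A) && P i)) /=.
apply: leq_trans (leq_addr _ _); apply: eq_leq; apply: eq_bigl => i.
by case E: ((i \in A) && P i); rewrite ?andbF // andbT; have := AP i; rewrite !inE E => ->.
Qed.

Lemma sub_sum'' (J : finType) (A A' P' : {pred J}) (G : J -> nat) :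
  A \subset [set i in A' | P' i] ->
  (\sum_(i in A) G i <= \sum_(i in A' | P' i) G i)%N.
Proof.
move=> /subsetP AP; rewrite [X in (_ <= X)%N](bigID (fun i => (i \in A))) /=.
apply: leq_trans (leq_addr _ _); apply: eq_leq; apply: eq_bigl => i.
by case E: (i \in A); rewrite ?andbF // andbT; have := AP i; rewrite !inE E => ->.
Qed.

Lemma refine_le T1 T2 (k1 : I -> T1) (k2 : I -> T2) :
  (forall x y, k2 x = k2 y -> k1 x = k1 y) -> (F k1 <= F k2)%N.
Proof.
move=> H; rewrite /F.
have hr : forall x, \bigcup_(y in cls k2 x) cls k1 y = cls k1 x.
  move=> x; apply/setP => z; apply/bigcupP/idP.
    move=> [y]; rewrite !in_cls => /asboolP /H e /asboolP e2.
    by apply/asboolP; rewrite e2 e.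
  by move=> zx; exists x => //; apply: cls_self.
rewrite [X in (_ <= X)%N](partition_big_imset (fun T : {set I} => \bigcup_(y in T) cls k1 y)).
have -> : [set \bigcup_(y in T) cls k1 y | T : {set I} in [set cls k2 D | D in I]] =
          [set cls k1 D | D in I].
  rewrite -imset_comp; apply: eq_imset => x /=; exact: hr.
apply: leq_sum => S /imsetP [x _ ->].
apply: leq_trans (min_sub _ _).
suff hs : (#|cls k1 x| <= \sum_(i in [set cls k2 D | D in I] |
              \bigcup_(y in i) cls k1 y == cls k1 x) #|i|)%N.
  rewrite leq_min geq_minl /=; exact: leq_trans (geq_minr _ _) hs.
rewrite -sum1_card (partition_big_imset (cls k2) (cls k1 x)).
apply: (@leq_trans (\sum_(T in [set cls k2 y | y in cls k1 x]) #|T|)).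
  apply: leq_sum => T /imsetP [y yx eT].
  rewrite -sum1_card.
  apply: sub_sum'; apply/subsetP => z; rewrite !inE => /andP [_ /eqP <-].
  by rewrite cls_self.
apply: sub_sum''; apply/subsetP => T /imsetP [y yx ->]; rewrite !inE.
rewrite imset_f ?inE //= hr; apply/eqP.
by apply: cls_eq; move: yx; rewrite in_cls => /asboolP.
Qed.

Lemma sub_sum0 (J : finType) (A A' : {pred J}) (G : J -> nat) :
  A \subset A' -> (\sum_(i in A) G i <= \sum_(i in A') G i)%N.
Proof.
move=> /subsetP AP; rewrite [X in (_ <= X)%N](bigID (fun i => (i \in A))) /=.
apply: leq_trans (leq_addr _ _); apply: eq_leq; apply: eq_bigl => i.
by case E: (i \in A); rewrite ?andbF // andbT; have := AP i; rewrite E => ->.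
Qed.

Lemma concat_le T T1 T2 (k : I -> T) (k1 : I -> T1) (k2 : I -> T2) :
  (forall x y, k x = k y <-> (k1 x = k1 y /\ k2 x = k2 y)) ->
  (F k <= F k1 * F k2)%N.
Proof.
move=> hk.
have hc : forall x, cls k x = cls k1 x :&: cls k2 x.
  move=> x; apply/setP => z; rewrite in_setI !in_cls.
  apply/asboolP/andP => [/hk [e1 e2]|[/asboolP e1 /asboolP e2]].
    by split; apply/asboolP.
  by apply/hk.
rewrite /F.
apply: (@leq_trans (\sum_(S in [set p.1 :&: p.2 | p in setX [set cls k1 D | D in I] [set cls k2 D | D in I]]) minn beta #|S|)).
  apply: sub_sum0; apply/subsetP => S /imsetP [x _ ->].
  rewrite hc; apply/imsetP; exists (cls k1 x, cls k2 x) => //.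
  by rewrite in_setX !imset_f.
apply: leq_trans (img_le _ _ _) _.
apply: (@leq_trans (\sum_(p in setX [set cls k1 D | D in I] [set cls k2 D | D in I]) (minn beta #|p.1| * minn beta #|p.2|))).
  apply: leq_sum => [[S U]] /setXP [_ /imsetP [y _ ->]] /=.
  have h0 : (0 < #|cls k2 y|)%N by apply/card_gt0P; exists y; apply: cls_self.
  have h1 : (#|S :&: cls k2 y| <= #|S|)%N by apply/subset_leq_card/subsetIl.
  nia.
apply: eq_leq; rewrite big_distrl /=.
symmetry.
under eq_bigr do rewrite big_distrr /=.
rewrite pair_big /=; apply: eq_bigl => -[a b]; by rewrite in_setX.
Qed.

End Comb.

Lemma app_inj (T : Type) (a a' b b' : seq T) :
  size a = size a' -> a ++ b = a' ++ b' -> a = a' /\ b = b'.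
Proof.
elim: a a' => [|x a IH] [|x' a'] //= hs.
by case=> -> /(IH _ (eq_add_S _ _ hs)) [-> ->].
Qed.

Local Open Scope ring_scope.

Lemma ln_nat_ge0 (R : realType) (n : nat) : 0 <= ln (n%:R : R).
Proof.
case: n => [|n]; first by rewrite ln0.
by apply: ln_ge0; rewrite ler1n.
Qed.

Lemma ln_mono (R : realType) (a b : nat) : (a <= b)%N -> ln (a%:R : R) <= ln (b%:R).
Proof.
case: a => [|a] hab; first by rewrite ln0 // ln_nat_ge0.
rewrite ler_ln ?posrE ?ltr0n ?ler_nat //; lia.
Qed.

Lemma ln_mulle (R : realType) (a b : nat) :
  ln ((a * b)%N%:R : R) <= ln (a%:R) + ln (b%:R).
Proof.
case: a => [|a]; first by rewrite mul0n ln0 // add0r ln_nat_ge0.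
case: b => [|b]; first by rewrite muln0 ln0 // addr0 ln_nat_ge0.
by rewrite natrM lnM ?posrE ?ltr0n.
Qed.

Theorem lemma22 (R : realType) (I : finType) (Out : Type)
  (L : (I -> Out) -> Prop) (beta : nat) (hbeta : (0 < beta)%N) :
  arbitrage_free L (@p_beta R I Out beta).
Proof.
have hp : forall Q, @p_beta R I Out beta Q = ln ((F beta (eval_bundle Q))%:R).
  by [].
split.
  move=> Q1 Q2 _ _ H; rewrite !hp; apply: ln_mono; apply: (refine_le hbeta).
  by move=> x y; apply: H.
move=> Q1 Q2 _ _; rewrite !hp.
apply: le_trans (ln_mulle _ _ _); apply: ln_mono.
apply: (concat_le hbeta) => x y.
have ec : forall D, eval_bundle (Q1 ++ Q2) D = eval_bundle Q1 D ++ eval_bundle Q2 D.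
  by move=> D; rewrite /eval_bundle map_cat.
rewrite !ec; split.
  by apply: app_inj; rewrite /eval_bundle !size_map.
by case=> -> ->.
Qed.
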